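(* Let $V$ be a real symmetric $d\times d$ matrix and $W$ a complex Hermitian $d\times d$ matrix such that $V\ge W$ (i.e. $V-W$ is positive semidefinite). Then $$\mathrm{tr}\,V\;\ge\;\mathrm{tr}\,\mathrm{Re}\,W+\mathrm{tr}\,|\mathrm{Im}\,W|.$$
   Context: For a complex matrix $W$, $\bar W$ denotes the entrywise complex conjugate, $\mathrm{Re}\,W=(W+\bar W)/2$ and $\mathrm{Im}\,W=(W-\bar W)/(2i)$; for a Hermitian $W$, $\mathrm{Re}\,W$ is real symmetric and $\mathrm{Im}\,W$ is real antisymmetric. For any matrix $A$, $|A|=(A^*A)^{1/2}$. *)

(* Defs.v *)
(* Complex matrices are matrices over an abstract
   numClosedFieldType C (a model of the complex numbers, e.g. algC or
   R[i] for a real closed field R). *)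
From HB Require Import structures.
From mathcomp Require Import all_boot all_order all_algebra.
Set Implicit Arguments. Unset Strict Implicit. Unset Printing Implicit Defensive.
Import Order.TTheory GRing.Theory Num.Theory Num.Def.
Local Open Scope ring_scope.

Section MatDefs.
Variable C : numClosedFieldType.

Definition conj_mx m n (A : 'M[C]_(m, n)) : 'M[C]_(m, n) := map_mx conjC A.

Definition adj_mx m n (A : 'M[C]_(m, n)) : 'M[C]_(n, m) := (conj_mx A)^T.

Definition hermitian_mx n (A : 'M[C]_n) : Prop := adj_mx A = A.

Definition real_symmetric_mx n (A : 'M[C]_n) : Prop :=
  (forall i j, A i j \is Num.real) /\ A^T = A.

Definition psd_mx n (A : 'M[C]_n) : Prop :=
  hermitian_mx A /\ forall v : 'cV[C]_n, 0 <= (adj_mx v *m A *m v) 0 0.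

Definition Re_mx n (W : 'M[C]_n) : 'M[C]_n := 2^-1 *: (W + conj_mx W).
Definition Im_mx n (W : 'M[C]_n) : 'M[C]_n := (2 * 'i)^-1 *: (W - conj_mx W).

(* |A| = (A^* A)^{1/2}: the positive semidefinite square root of the
   (normal, indeed PSD) matrix A^* A, built from its spectral decomposition
   A^* A = P^-1 diag(d) P (P unitary, d >= 0) as P^-1 diag(sqrt d) P. *)
Definition abs_mx n (A : 'M[C]_n) : 'M[C]_n :=
  let M := adj_mx A *m A in
  invmx (spectralmx M) *m diag_mx (map_mx sqrtC (spectral_diag M)) *m spectralmx M.

End MatDefs.

(* Main.v *)
Require Import Defs.
From HB Require Import structures.
From mathcomp Require Import all_boot all_order all_algebra.
From mathcomp Require Import ring.
Set Implicit Arguments. Unset Strict Implicit. Unset Printing Implicit Defensive.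
Import Order.TTheory GRing.Theory Num.Theory Num.Def.
Local Open Scope ring_scope.

Section H.
Variable C : numClosedFieldType.

Lemma adjE m n (A : 'M[C]_(m,n)) : adj_mx A = map_mx conjC A^T.
Proof. by rewrite /adj_mx /conj_mx map_trmx. Qed.

Lemma adj_mul m n p (A : 'M[C]_(m,n)) (B : 'M[C]_(n,p)) :
  adj_mx (A *m B) = adj_mx B *m adj_mx A.
Proof. by rewrite /adj_mx /conj_mx map_mxM trmx_mul. Qed.

Lemma adjK m n (A : 'M[C]_(m,n)) : adj_mx (adj_mx A) = A.
Proof. by apply/matrixP=> i j; rewrite !mxE conjCK. Qed.

Lemma adjD m n (A B : 'M[C]_(m,n)) : adj_mx (A + B) = adj_mx A + adj_mx B.
Proof. by apply/matrixP=> i j; rewrite !mxE rmorphD. Qed.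

Lemma adjN m n (A : 'M[C]_(m,n)) : adj_mx (- A) = - adj_mx A.
Proof. by apply/matrixP=> i j; rewrite !mxE rmorphN. Qed.

Lemma adjZ m n a (A : 'M[C]_(m,n)) : adj_mx (a *: A) = a^* *: adj_mx A.
Proof. by apply/matrixP=> i j; rewrite !mxE rmorphM. Qed.

Lemma adj_diag n (e : 'rV[C]_n) : adj_mx (diag_mx e) = diag_mx (map_mx conjC e).
Proof. by rewrite /adj_mx /conj_mx map_diag_mx tr_diag_mx. Qed.

Lemma adj1 n : adj_mx (1%:M : 'M[C]_n) = 1%:M.
Proof. by rewrite /adj_mx /conj_mx map_mx1 trmx1. Qed.

Lemma unitP n (P : 'M[C]_n) : P \is unitarymx -> P *m adj_mx P = 1%:M.
Proof. by move/unitarymxP; rewrite adjE. Qed.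

Lemma unitP' n (P : 'M[C]_n) : P \is unitarymx -> adj_mx P *m P = 1%:M.
Proof. by move/unitP/mulmx1C. Qed.

Lemma unit_inv n (P : 'M[C]_n) : P \is unitarymx -> invmx P = adj_mx P.
Proof. by move=> /invmx_unitary ->; rewrite adjE. Qed.

Lemma psd_tr n m (A : 'M[C]_n) :
  (forall v : 'cV_n, 0 <= (adj_mx v *m A *m v) 0 0) ->
  forall B : 'M[C]_(m,n), 0 <= \tr (B *m A *m adj_mx B).
Proof.
move=> HA B; rewrite /mxtrace; apply: sumr_ge0 => i _.
have := HA (adj_mx (row i B)); rewrite adjK.
congr (_ <= _); rewrite !mxE; apply: eq_bigr => j _; rewrite !mxE.
by congr (_ * _); apply: eq_bigr => k _; rewrite !mxE.
Qed.
Lemma comm_diag_map n (K : 'M[C]_n) (d : 'rV[C]_n) (g : C -> C) :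
  K *m diag_mx d = diag_mx d *m K ->
  K *m diag_mx (map_mx g d) = diag_mx (map_mx g d) *m K.
Proof.
move=> /matrixP HK; apply/matrixP => i j.
have := HK i j; rewrite !mul_mx_diag !mul_diag_mx !mxE => e.
have [->|nz] := eqVneq (K i j) 0; first by rewrite mulr0 mul0r.
move: e; rewrite mulrC => /(mulIf nz) ->; exact: mulrC.
Qed.

Lemma conj_mxK m n (A : 'M[C]_(m,n)) : conj_mx (conj_mx A) = A.
Proof. by apply/matrixP=> i j; rewrite !mxE conjCK. Qed.

Lemma conj_mxM m n p (A : 'M[C]_(m,n)) (B : 'M[C]_(n,p)) :
  conj_mx (A *m B) = conj_mx A *m conj_mx B.
Proof. exact: map_mxM. Qed.

Lemma psd_conj n (A : 'M[C]_n) :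
  (forall v : 'cV_n, 0 <= (adj_mx v *m A *m v) 0 0) ->
  (forall v : 'cV_n, 0 <= (adj_mx v *m conj_mx A *m v) 0 0).
Proof.
move=> HA v; have := HA (conj_mx v).
have -> : adj_mx v *m conj_mx A *m v =
   conj_mx (adj_mx (conj_mx v) *m A *m conj_mx v).
  rewrite !conj_mxM conj_mxK; congr (_ *m _ *m _); apply/matrixP => i j; by rewrite !mxE conjCK.
by rewrite [in X in _ -> X]mxE conjC_ge0.
Qed.
End H.

Theorem lemma3 (C : numClosedFieldType) (d : nat) (V W : 'M[C]_d) :
  real_symmetric_mx V -> hermitian_mx W -> psd_mx (V - W) ->
  \tr (Re_mx W) + \tr (abs_mx (Im_mx W)) <= \tr V.
Proof.
move=> [Vreal VT] hW [hA psdA].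
set A := V - W in hA psdA.
have cV : conj_mx V = V by apply/matrixP=> i j; rewrite mxE conj_Creal.
have cW : conj_mx W = W^T by rewrite -[in RHS]hW /adj_mx trmxK.
have cA : conj_mx A = A^T by rewrite -[in RHS]hA /adj_mx trmxK.
have trRe : \tr (Re_mx W) = \tr W.
  rewrite /Re_mx mxtraceZ mxtraceD cW mxtrace_tr; by field.
set H := Im_mx W.
set c : C := (2 * 'i)^-1.
have HE : H = c *: (conj_mx A - A).
  rewrite /H /Im_mx; congr (_ *: _); apply/matrixP => i j.
  rewrite !mxE raddfB /= (conj_Creal (Vreal i j)); ring.
have adjH : adj_mx H = - H.
  rewrite HE adjZ adjD adjN hA /adj_mx conj_mxK -cA.
  have cc : conjC c = - c.
    rewrite /c fmorphV /= rmorphM /= conjCi rmorph_nat mulrN invrN //.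
  by rewrite cc scaleNr.
rewrite /abs_mx /=.
set M := adj_mx H *m H.
have adjM : adj_mx M = M by rewrite /M adj_mul adjK.
have Mnorm : M \is normalmx by apply/normalmxP; rewrite -adjE adjM.
have /orthomx_spectralP Meq := Mnorm.
set P := spectralmx M in Meq *.
set mu := spectral_diag M in Meq *.
have PU : P \is unitarymx := spectral_unitarymx M.
have Pu1 := unitP PU; have Pu2 := unitP' PU; have invP := unit_inv PU.
have Deq : P *m M *m adj_mx P = diag_mx mu.
  by rewrite {1}Meq invP !mulmxA Pu1 mul1mx -mulmxA Pu1 mulmx1.
set K := P *m H *m adj_mx P.
have adjK' : adj_mx K = - K.
  by rewrite /K !adj_mul adjK adjH mulNmx mulmxN mulmxA.
have KK : adj_mx K *m K = diag_mx mu.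
  rewrite -Deq /K !adj_mul adjK /M !mulmxA; congr (_ *m _).
  by rewrite -[_ *m adj_mx P *m P]mulmxA Pu2 mulmx1.
have DK : diag_mx mu = - (K *m K) by rewrite -KK adjK' mulNmx.
have commK : K *m diag_mx mu = diag_mx mu *m K.
  by rewrite DK mulmxN mulNmx mulmxA.
have mu_ge0 : forall i j, 0 <= mu i j.
  move=> i j; rewrite (ord1 i).
  have := congr1 (fun X : 'M[C]_d => X j j) KK; rewrite /= [diag_mx _ _ _]mxE eqxx mulr1n => <-.
  rewrite mxE; apply: sumr_ge0 => k _; rewrite !mxE mulrC; exact: mul_conjC_ge0.
set e := map_mx sqrtC mu.
set f := map_mx (fun x => (sqrtC x)^-1) mu.
have commF : K *m diag_mx f = diag_mx f *m K := comm_diag_map _ commK.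
have trabs : \tr (invmx P *m diag_mx e *m P) = \tr (diag_mx e).
  by rewrite mxtrace_mulC mulmxA mulmxV ?spectral_unit // mul1mx.
rewrite trabs trRe.
set G := 'i *: (K *m diag_mx f).
have adjF : adj_mx (diag_mx f) = diag_mx f.
  rewrite adj_diag; congr diag_mx; apply/matrixP => i j; rewrite !mxE.
  by rewrite fmorphV /= conj_Creal // ger0_real // sqrtC_ge0.
have adjG : adj_mx G = G.
  rewrite /G adjZ adj_mul adjF adjK' conjCi commF mulmxN scalerN scaleNr.
  by rewrite opprK.
have muf : diag_mx mu *m diag_mx f = diag_mx e.
  rewrite mulmx_diag; congr diag_mx; apply/matrixP => i j; rewrite !mxE.
  rewrite (ord1 i); set x := mu 0 j; rewrite -{1}(sqrtCK x) expr2 -mulrA.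
  have [->|nz] := eqVneq (sqrtC x) 0; first by rewrite mul0r.
  by rewrite mulfV // mulr1.
have EGK : diag_mx e = 'i *: (G *m K).
  rewrite /G -scalemxAl scalerA -expr2 sqrCi scaleN1r -mulmxA -commF mulmxA.
  by rewrite -muf DK mulNmx.
pose Q : 'M[C]_d := diag_mx (map_mx (fun x : C => (x == 0)%:R) mu).
have QQ : adj_mx Q *m Q = Q.
  rewrite adj_diag mulmx_diag; congr diag_mx; apply/matrixP => i j; rewrite !mxE.
  rewrite (ord1 i); case: (_ == 0); rewrite ?mulr0 ?mulr1 //; exact: conjC1.
have QGG : Q = 1%:M - G *m G.
  rewrite /G -scalemxAl -scalemxAr scalerA -expr2 sqrCi scaleN1r.
  have KK2 : K *m K = - diag_mx mu by rewrite DK opprK.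
  rewrite mulmxA -[K *m diag_mx f *m K]mulmxA -commF mulmxA KK2 !mulNmx opprK !mulmx_diag.
  apply/matrixP => i j; rewrite !mxE.
  case: (i == j); rewrite ?mulr0n ?subr0 // !mulr1n.
  have [->|nz] := eqVneq (mu 0 i) 0; first by rewrite mul0r mul0r subr0.
  rewrite /=.
  have nz2 : sqrtC (mu 0 i) != 0 by rewrite sqrtC_eq0.
  rewrite -{1}(sqrtCK (mu 0 i)) expr2 mulfK // divff // subrr; exact: mulr0n.
pose X := P *m A *m adj_mx P.
pose Y := P *m conj_mx A *m adj_mx P.
have KXY : K = c *: (Y - X).
  by rewrite /K HE -scalemxAr -scalemxAl mulmxBr mulmxBl.
have trX : \tr X = \tr A by rewrite /X mxtrace_mulC mulmxA Pu2 mul1mx.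
have trY : \tr Y = \tr A by rewrite /Y mxtrace_mulC mulmxA Pu2 mul1mx cA mxtrace_tr.
have posX : forall B : 'M[C]_d, 0 <= \tr (adj_mx B *m B *m X).
  move=> B; rewrite -mulmxA mxtrace_mulC /X !mulmxA.
  by have := psd_tr psdA (B *m P); rewrite adj_mul !mulmxA.
have posY : forall B : 'M[C]_d, 0 <= \tr (adj_mx B *m B *m Y).
  move=> B; rewrite -mulmxA mxtrace_mulC /Y !mulmxA.
  by have := psd_tr (psd_conj psdA) (B *m P); rewrite adj_mul !mulmxA.
have D1 : (2%:R : C) *: (1%:M + G) = adj_mx (1%:M + G) *m (1%:M + G) + adj_mx Q *m Q.
  rewrite QQ adjD adj1 adjG QGG mulmxDl !mulmxDr !mul1mx mulmx1 scaler_nat mulr2n.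
  apply/matrixP=> i j; rewrite !mxE; ring.
have D2 : (2%:R : C) *: (1%:M - G) = adj_mx (1%:M - G) *m (1%:M - G) + adj_mx Q *m Q.
  rewrite QQ adjD adjN adj1 adjG QGG mulmxBl !mulmxBr !mul1mx mulmx1 scaler_nat mulr2n.
  apply/matrixP=> i j; rewrite !mxE; ring.
have tr1 : 0 <= \tr X + \tr (G *m X).
  have := congr1 (fun Z : 'M[C]_d => \tr (Z *m X)) D1.
  rewrite /= mulmxDl mxtraceD -scalemxAl mxtraceZ => e2.
  have : 0 <= 2%:R * \tr ((1%:M + G) *m X) by rewrite e2 addr_ge0 ?posX.
  by rewrite pmulr_rge0 ?ltr0n // mulmxDl mul1mx mxtraceD.
have tr2 : 0 <= \tr Y - \tr (G *m Y).
  have := congr1 (fun Z : 'M[C]_d => \tr (Z *m Y)) D2.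
  rewrite /= mulmxDl mxtraceD -scalemxAl mxtraceZ => e2.
  have : 0 <= 2%:R * \tr ((1%:M - G) *m Y) by rewrite e2 addr_ge0 ?posY.
  by rewrite pmulr_rge0 ?ltr0n // mulmxBl mul1mx raddfB.
have trE : \tr (diag_mx e) = 2^-1 * (\tr (G *m Y) - \tr (G *m X)).
  rewrite EGK KXY -scalemxAr mulmxBr !mxtraceZ raddfB /= mulrA; congr (_ * _).
  rewrite /c; field; exact: neq0Ci.
have trV : \tr V = \tr W + \tr A by rewrite /A raddfB /= addrC subrK.
rewrite trV lerD2l trE -subr_ge0 -trX.
have -> : \tr X - 2^-1 * (\tr (G *m Y) - \tr (G *m X)) =
   2^-1 * ((\tr X + \tr (G *m X)) + (\tr Y - \tr (G *m Y))).
  by rewrite trY -trX; field.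
apply: mulr_ge0; last exact: addr_ge0.
by rewrite invr_ge0 ler0n.
Qed.
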